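(* Let $A$ be an $n\times n$ binary matrix with zero diagonal and $\widetilde A=A+I_n$. The facets-pairing structure $\mathcal{F}_A$ on $\mathcal{C}^n$ is strong if and only if for all $1\le j_1<\dots<j_s\le n$ one has $\mathrm{rank}_{\mathbb{Z}_2}\big(\widetilde A^{j_1\cdots j_s}_{j_1\cdots j_s}\big)=\mathrm{rank}_{\mathbb{Z}_2}\big(\widetilde A^{j_1\cdots j_s}\big)$.
   Context: $\mathcal{C}^n=\{x\in\mathbb{R}^n: -\tfrac14\le x_i\le\tfrac14\}$; $\mathbf{F}(i)$, $\mathbf{F}(-i)$ ($1\le i\le n$) are the facets in $\{x_i=\tfrac14\}$, $\{x_i=-\tfrac14\}$. Binary matrices have entries in $\mathbb{Z}_2$; $A^i_k$ denotes the $(i,k)$ entry viewed as $0$ or $1$. For $1\le j_1<\dots<j_s\le n$, $\widetilde A^{j_1\cdots j_s}$ is the $s\times n$ submatrix of $\widetilde A$ formed by rows $j_1,\dots,j_s$, and $\widetilde A^{j_1\cdots j_s}_{j_1\cdots j_s}$ is the $s\times s$ principal submatrix on rows and columns $j_1,\dots,j_s$. $\mathcal{F}_A$ pairs $\mathbf{F}(j)$ with $\mathbf{F}(-j)$ via $\tau^A_j:\mathbf{F}(j)\to\mathbf{F}(-j)$, $\tau^A_j(x)=y$ with $y_{|j|}=-x_{|j|}$ and $y_k=(-1)^{A^{|j|}_k}x_k$ for $k\ne|j|$. A composition $\tau^A_{k_m}\circ\dots\circ\tau^A_{k_1}$ applied to a proper face $f$ is valid if $f\subset\mathbf{F}(k_1)$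 and $\tau^A_{k_i}\circ\dots\circ\tau^A_{k_1}(f)\subset\mathbf{F}(k_{i+1})$ for $1\le i<m$ ($m=0$ allowed, giving the identity). For a proper face $f$ let $\Xi(f)$ be the set of facets containing $f$; if $f\subset\mathbf{F}(k)$ and $f'=\tau^A_k(f)$, define $\Psi^f_k:\Xi(f)\to\Xi(f')$ by $\Psi^f_k(\mathbf{F}(k))=\mathbf{F}(-k)$ and, for $F'\in\Xi(f)\setminus\{\mathbf{F}(k)\}$, $\Psi^f_k(F')$ is the facet $G$ with $G\cap\mathbf{F}(-k)=\tau^A_k(F'\cap\mathbf{F}(k))$. $\mathcal{F}_A$ is strong if for every proper face $f$ and any two valid compositions mapping $f$ onto the same face $\widetilde f$: (a) they agree at every point of $f$; and (b) the corresponding composites of the maps $\Psi$ along the two compositions coincide as maps $\Xi(f)\to\Xi(\widetilde f)$. *)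

(* Defs.v *)
From HB Require Import structures.
From mathcomp Require Import all_boot all_order all_algebra.
Set Implicit Arguments. Unset Strict Implicit. Unset Printing Implicit Defensive.
Import Order.TTheory GRing.Theory Num.Theory.
Local Open Scope ring_scope.

Section Cube.
Variables (R : realFieldType) (n : nat).

Definition point := 'I_n -> R.

Definition quarter : R := (4%:R)^-1.
Definition sgn (b : bool) : R := if b then 1 else -1.

Definition in_cube (x : point) : Prop := forall i, - quarter <= x i <= quarter.

(* Signed indices: (i, true) stands for i, (i, false) for -i. *)
Definition sidx := ('I_n * bool)%type.
Definition sneg (k : sidx) : sidx := (k.1, ~~ k.2).

Definition in_facet (k : sidx) (x : point) : Prop :=
  in_cube x /\ x k.1 = sgn k.2 * quarter.

(* Nonempty faces of the cube: each coordinate is fixed to +1/4 (Some true),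
   to -1/4 (Some false), or free (None). *)
Definition face := {ffun 'I_n -> option bool}.
Definition in_face (f : face) (x : point) : Prop :=
  in_cube x /\ forall i b, f i = Some b -> x i = sgn b * quarter.
Definition proper_face (f : face) : Prop := exists i, f i != None.

Definition tau (A : 'M['F_2]_n) (k : sidx) (x : point) : point :=
  fun i => if i == k.1 then - x i else if A k.1 i != 0 then - x i else x i.

(* composition tau_{k_m} o ... o tau_{k_1} for s = [:: k_1; ...; k_m] *)
Definition comp (A : 'M['F_2]_n) (s : seq sidx) (x : point) : point :=
  foldl (fun y k => tau A k y) x s.

Definition img (A : 'M['F_2]_n) (k : sidx) (P : point -> Prop) : point -> Prop :=
  fun y => exists2 x, P x & tau A k x = y.

Fixpoint valid_on (A : 'M['F_2]_n) (P : point -> Prop) (s : seq sidx) : Prop :=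
  match s with
  | [::] => True
  | k :: s' => (forall x, P x -> in_facet k x) /\ valid_on A (img A k P) s'
  end.

Definition valid (A : 'M['F_2]_n) (s : seq sidx) (f : face) : Prop :=
  valid_on A (in_face f) s.

Definition maps_onto (A : 'M['F_2]_n) (s : seq sidx) (f g : face) : Prop :=
  forall y, in_face g y <-> exists2 x, in_face f x & comp A s x = y.

Definition Xi (f : face) (F : sidx) : Prop := forall x, in_face f x -> in_facet F x.

(* graph of Psi^f_k : Psi(F(k)) = F(-k); otherwise Psi(F') = G with
   G ∩ F(-k) = tau_k (F' ∩ F(k)) *)
Definition Psi (A : 'M['F_2]_n) (k F G : sidx) : Prop :=
  (F = k /\ G = sneg k) \/
  (F <> k /\ forall y, (in_facet G y /\ in_facet (sneg k) y) <->
                       exists2 x, in_facet F x /\ in_facet k x & tau A k x = y).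

Fixpoint PsiComp (A : 'M['F_2]_n) (s : seq sidx) (F G : sidx) : Prop :=
  match s with
  | [::] => F = G
  | k :: s' => exists2 H, Psi A k F H & PsiComp A s' H G
  end.

Definition strong (A : 'M['F_2]_n) : Prop :=
  forall (f g : face) (s1 s2 : seq sidx),
    proper_face f ->
    valid A s1 f -> valid A s2 f ->
    maps_onto A s1 f g -> maps_onto A s2 f g ->
    (forall x, in_face f x -> comp A s1 x = comp A s2 x) /\
    (forall F G, Xi f F -> (PsiComp A s1 F G <-> PsiComp A s2 F G)).

End Cube.

Definition rows_sub (F : fieldType) n (M : 'M[F]_n) (S : {set 'I_n}) :
  'M[F]_(#|S|, n) := rowsub (fun i : 'I_#|S| => enum_val i) M.
Definition principal_sub (F : fieldType) n (M : 'M[F]_n) (S : {set 'I_n}) :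
  'M[F]_#|S| := mxsub (fun i : 'I_#|S| => enum_val i)
                      (fun i : 'I_#|S| => enum_val i) M.

(* Main.v *)
Require Import Defs.
From HB Require Import structures.
From mathcomp Require Import all_boot all_order all_algebra.
From Stdlib Require Import FunctionalExtensionality.
Import Order.TTheory GRing.Theory Num.Theory.
Set Implicit Arguments. Unset Strict Implicit. Unset Printing Implicit Defensive.
Local Open Scope ring_scope.

Lemma F2c (a : 'F_2) : a = 0 \/ a = 1.
Proof. case: a => m Hm. have: (m < 2)%N by exact: Hm. case: m Hm => [|[|m]] Hm // _.
  by left; apply: val_inj. by right; apply: val_inj. Qed.

Lemma nzD (a b : 'F_2) : (a + b != 0) = (a != 0) (+) (b != 0).
Proof. by case: (F2c a) => ->; case: (F2c b) => -> //; rewrite (_ : (1 : 'F_2) + 1 = 0) //; apply: val_inj. Qed.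

Lemma F2_eq (a b : 'F_2) : (a != 0) = (b != 0) -> a = b.
Proof. by case: (F2c a) => ->; case: (F2c b) => ->. Qed.

Lemma q_gt0 (R : realFieldType) : 0 < quarter R.
Proof. by rewrite /quarter invr_gt0 ltr0n. Qed.

Lemma sgnq_neq0 (R : realFieldType) b : sgn R b * quarter R != 0.
Proof. have := q_gt0 R; case: b; rewrite /sgn ?mul1r ?mulN1r ?oppr_eq0 => h; exact: lt0r_neq0. Qed.

Lemma sgnq_inj (R : realFieldType) b b' : sgn R b * quarter R = sgn R b' * quarter R -> b = b'.
Proof.
have := q_gt0 R; case: b; case: b' => //= h; rewrite /sgn ?mul1r ?mulN1r => /eqP;
  rewrite -subr_eq0 ?opprK -?opprD ?oppr_eq0 -mulr2n mulrn_eq0 /= => /eqP e;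
  by move: h; rewrite e ltxx.
Qed.

Lemma sgnq_neg (R : realFieldType) b : - (sgn R b * quarter R) = sgn R (~~ b) * quarter R.
Proof. by case: b; rewrite /sgn /= ?mulN1r ?mul1r ?opprK. Qed.

Lemma sgnq_cube (R : realFieldType) b : - quarter R <= sgn R b * quarter R <= quarter R.
Proof.
have h := q_gt0 R; case: b; rewrite /sgn ?mul1r ?mulN1r lexx ?andbT //=;
  by rewrite (ge0_cp (ltW h)).
Qed.

Lemma zero_cube (R : realFieldType) : - quarter R <= 0 <= quarter R.
Proof. by have h := q_gt0 R; rewrite oppr_le0 ltW. Qed.

Lemma sgnq_neq (R : realFieldType) b : sgn R b * quarter R != 0.
Proof. exact: sgnq_neq0. Qed.

Definition flipp (R : realFieldType) n (v : 'rV['F_2]_n) (x : point R n) : point R n :=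
  fun i => if v 0 i != 0 then - x i else x i.
Definition flipf n (v : 'rV['F_2]_n) (f : face n) : face n :=
  [ffun i => if v 0 i != 0 then omap negb (f i) else f i].
Definition vs n (A : 'M['F_2]_n) (s : seq (sidx n)) : 'rV['F_2]_n :=
  \sum_(k <- s) row k.1 (A + 1%:M).

Lemma flippK (R : realFieldType) n (v : 'rV['F_2]_n) (x : point R n) : flipp v (flipp v x) = x.
Proof. apply: functional_extensionality => i; rewrite /flipp; by case: (v 0 i != 0); rewrite ?opprK. Qed.

Lemma flipfK n (v : 'rV['F_2]_n) (f : face n) : flipf v (flipf v f) = f.
Proof. apply/ffunP => i; rewrite !ffunE; case: (v 0 i != 0) => //; by case: (f i) => //= b; rewrite negbK. Qed.

Lemma flippD (R : realFieldType) n (v w : 'rV['F_2]_n) (x : point R n) :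
  flipp v (flipp w x) = flipp (w + v) x.
Proof.
apply: functional_extensionality => i; rewrite /flipp mxE nzD.
by case: (w 0 i != 0); case: (v 0 i != 0); rewrite ?opprK.
Qed.

Lemma flipp0 (R : realFieldType) n (x : point R n) : flipp 0 x = x.
Proof. apply: functional_extensionality => i; by rewrite /flipp mxE eqxx. Qed.

Lemma flipf0 n (f : face n) : flipf 0 f = f.
Proof. apply/ffunP => i; by rewrite ffunE mxE eqxx. Qed.

Lemma flipp_cube (R : realFieldType) n (v : 'rV['F_2]_n) (x : point R n) :
  in_cube x -> in_cube (flipp v x).
Proof.
move=> h i; rewrite /flipp; case: ifP => // _.
case/andP: (h i) => h1 h2; by rewrite lerNl opprK h2 lerNl h1.
Qed.

Lemma face_flip (R : realFieldType) n (v : 'rV['F_2]_n) (f : face n) (x : point R n) :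
  in_face f x -> in_face (flipf v f) (flipp v x).
Proof.
case=> hc hf; split; first exact: flipp_cube.
move=> i b; rewrite ffunE /flipp; case: ifP => _; last exact: hf.
case E: (f i) => [b0|] //= [<-]; by rewrite (hf _ _ E) sgnq_neg.
Qed.

Lemma img_face (R : realFieldType) n (v : 'rV['F_2]_n) (f : face n) (y : point R n) :
  (exists2 x, in_face f x & flipp v x = y) <-> in_face (flipf v f) y.
Proof.
split; first by case=> x hx <-; exact: face_flip.
move=> hy; exists (flipp v y); last exact: flippK.
by rewrite -(flipfK v f); apply: face_flip.
Qed.

Lemma tauE (R : realFieldType) n (A : 'M['F_2]_n) k (x : point R n) :
  (forall i, A i i = 0) -> tau A k x = flipp (row k.1 (A + 1%:M)) x.
Proof.
move=> hA; apply: functional_extensionality => i; rewrite /tau /flipp !mxE.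
case: eqP => [->|/eqP ne]; first by rewrite hA eqxx add0r mulr1n oner_neq0.
rewrite eq_sym in ne; by rewrite (negbTE ne) mulr0n addr0.
Qed.

Lemma compE (R : realFieldType) n (A : 'M['F_2]_n) s (x : point R n) :
  (forall i, A i i = 0) -> Defs.comp A s x = flipp (vs A s) x.
Proof.
move=> hA; elim: s x => [|k s IH] x; first by rewrite /vs big_nil flipp0.
rewrite /vs big_cons -/(vs A s) -flippD -IH -tauE //.
Qed.

Definition wf (R : realFieldType) n (f : face n) : point R n :=
  fun i => if f i is Some b then sgn R b * quarter R else 0.

Lemma wf_face (R : realFieldType) n (f : face n) : in_face f (wf R f).
Proof.
split; first by move=> i; rewrite /wf; case: (f i) => [b|]; [exact: sgnq_cube | exact: zero_cube].
by move=> i b E; rewrite /wf E.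
Qed.

Lemma face_ext (R : realFieldType) n (g h : face n) :
  (forall y : point R n, in_face g y <-> in_face h y) -> g = h.
Proof.
move=> e; apply/ffunP => i.
have [_ hg] := proj2 (e _) (wf_face R h).
have [_ hh] := proj1 (e _) (wf_face R g).
case Eg: (g i) => [b|]; case Eh: (h i) => [b'|] //.
- by have := hg _ _ Eg; rewrite /wf Eh => /sgnq_inj ->.
- by have := hg _ _ Eg; rewrite /wf Eh => /eqP; rewrite eq_sym (negbTE (sgnq_neq0 _ _)).
- by have := hh _ _ Eh; rewrite /wf Eg => /eqP; rewrite eq_sym (negbTE (sgnq_neq0 _ _)).
Qed.

Lemma facet_face (R : realFieldType) n (f : face n) (k : sidx n) :
  (forall x : point R n, in_face f x -> in_facet k x) -> f k.1 = Some k.2.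
Proof.
move=> h; have [_ e] := h _ (wf_face R f); move: e; rewrite /wf.
case: (f k.1) => [b /sgnq_inj -> //|/eqP]; by rewrite eq_sym (negbTE (sgnq_neq0 _ _)).
Qed.

Lemma face_facet (R : realFieldType) n (f : face n) (k : sidx n) :
  f k.1 = Some k.2 -> forall x : point R n, in_face f x -> in_facet k x.
Proof. by move=> E x [hc hf]; split => //; apply: hf. Qed.

Lemma valid_on_ext (R : realFieldType) n (A : 'M['F_2]_n) s (P Q : point R n -> Prop) :
  (forall x, P x <-> Q x) -> valid_on A P s -> valid_on A Q s.
Proof.
elim: s P Q => [|k s IH] P Q e //= [h1 h2]; split.
  by move=> x /e; apply: h1.
apply: (IH _ _ _ h2) => y; split; case=> x hx <-; exists x => //; exact/e.
Qed.

Lemma img_tau_face (R : realFieldType) n (A : 'M['F_2]_n) k (f : face n) :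
  (forall i, A i i = 0) ->
  forall y : point R n, img A k (in_face f) y <-> in_face (flipf (row k.1 (A + 1%:M)) f) y.
Proof.
move=> hA y; split.
  by case=> x hx <-; apply/img_face; exists x => //; rewrite tauE.
by case/img_face=> x hx <-; exists x => //; rewrite tauE.
Qed.

Lemma maps_ontoE (R : realFieldType) n (A : 'M['F_2]_n) s (f g : face n) :
  (forall i, A i i = 0) ->
  maps_onto R A s f g -> g = flipf (vs A s) f.
Proof.
move=> hA h; apply: (face_ext (R := R)) => y; split.
  by case/h=> x hx <-; apply/img_face; exists x => //; rewrite compE.
by case/img_face=> x hx <-; apply/h; exists x => //; rewrite compE.
Qed.

Lemma maps_ontoI (R : realFieldType) n (A : 'M['F_2]_n) s (f : face n) :
  (forall i, A i i = 0) -> maps_onto R A s f (flipf (vs A s) f).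
Proof.
move=> hA y; split.
  by case/img_face=> x hx <-; exists x => //; rewrite compE.
by case=> x hx <-; apply/img_face; exists x => //; rewrite compE.
Qed.

Lemma flipf_none n (v : 'rV['F_2]_n) (f : face n) i : (flipf v f i != None) = (f i != None).
Proof. rewrite ffunE; case: (v 0 i != 0) => //; by case: (f i). Qed.

Lemma valid_inS (R : realFieldType) n (A : 'M['F_2]_n) s (f : face n) :
  (forall i, A i i = 0) -> valid R A s f -> all (fun k => f k.1 != None) s.
Proof.
move=> hA; elim: s f => [|k s IH] f //= [h1 h2].
rewrite (facet_face h1) /=.
have := IH _ (valid_on_ext (img_tau_face k f hA) h2).
by apply: sub_all => k'; rewrite flipf_none.
Qed.

Lemma valid_exists (R : realFieldType) n (A : 'M['F_2]_n) (js : seq 'I_n) (f : face n) :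
  (forall i, A i i = 0) -> all (fun j => f j != None) js ->
  exists s, map fst s = js /\ valid R A s f.
Proof.
move=> hA; elim: js f => [|j js IH] f /=; first by exists [::].
case/andP; case E: (f j) => [b|] // _ hall.
have [s [hs hv]] : exists s, map fst s = js /\ valid R A s (flipf (row j (A + 1%:M)) f).
  by apply: IH; apply: sub_all hall => k; rewrite flipf_none.
exists ((j, b) :: s); split; first by rewrite /= hs.
split; first exact: face_facet.
apply: valid_on_ext hv => y; split => h; apply/(img_tau_face (j, b) f hA y) => //.
Qed.

Lemma rowE n (M : 'M['F_2]_n) i j : row i M 0 j = M i j.
Proof. by rewrite mxE. Qed.

Definition psi n (A : 'M['F_2]_n) (k F : sidx n) : sidx n :=
  (F.1, F.2 (+) ((A + 1%:M) k.1 F.1 != 0)).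

Definition pt2 (R : realFieldType) n (G K : sidx n) : point R n :=
  fun i => if i == G.1 then sgn R G.2 * quarter R
           else if i == K.1 then sgn R K.2 * quarter R else 0.

Lemma pt2_cube (R : realFieldType) n (G K : sidx n) : in_cube (pt2 R G K).
Proof.
move=> i; rewrite /pt2; case: ifP => _; first exact: sgnq_cube.
case: ifP => _; [exact: sgnq_cube | exact: zero_cube].
Qed.

Lemma pt2_G (R : realFieldType) n (G K : sidx n) : in_facet G (pt2 R G K).
Proof. by split; [exact: pt2_cube | rewrite /pt2 eqxx]. Qed.

Lemma pt2_K (R : realFieldType) n (G K : sidx n) : G.1 != K.1 -> in_facet K (pt2 R G K).
Proof. by move=> ne; split; [exact: pt2_cube | rewrite /pt2 eq_sym (negbTE ne) eqxx]. Qed.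

Lemma facet_opp (R : realFieldType) n (k : sidx n) (x : point R n) :
  in_facet k x -> in_facet (sneg k) x -> False.
Proof. case=> _ h1 [_]; rewrite /sneg /= h1 => /sgnq_inj; by case: (k.2). Qed.

Lemma sidx_eq n (F G : sidx n) : F.1 = G.1 -> F.2 = G.2 -> F = G.
Proof. by case: F; case: G => ? ? ? ? /= -> ->. Qed.

Lemma same_idx n (F k : sidx n) : F <> k -> F.1 = k.1 -> F = sneg k.
Proof.
move=> ne e; apply: sidx_eq => //=; case: (boolP (F.2 == k.2)) => [/eqP e2|].
  by case: ne; apply: sidx_eq.
by case: (F.2); case: (k.2).
Qed.

Lemma rhs_char (R : realFieldType) n (A : 'M['F_2]_n) (k F : sidx n) (y : point R n) :
  (forall i, A i i = 0) -> F <> k ->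
  (exists2 x, in_facet F x /\ in_facet k x & tau A k x = y) <->
  (in_facet (psi A k F) y /\ in_facet (sneg k) y).
Proof.
move=> hA ne.
have hkk : (A + 1%:M) k.1 k.1 != 0 by rewrite !mxE hA eqxx add0r mulr1n oner_neq0.
case: (eqVneq F.1 k.1) => [e | ne1].
  have eF := same_idx ne e.
  split; first by case=> x [h1 h2]; case: (facet_opp h2); rewrite -eF.
  have -> : psi A k F = k by rewrite /psi eF /= hkk; apply: sidx_eq => //=; by case: (k.2).
  by case=> h1 h2; case: (facet_opp h1 h2).
split.
  case=> x [[hc1 hF] [hc2 hk]] <-; rewrite tauE //; split; split; try exact: flipp_cube.
    rewrite /flipp /= rowE hF; by case: ((A + 1%:M) k.1 F.1 != 0); rewrite ?sgnq_neg ?addbT ?addbF.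
  by rewrite /flipp /= rowE hkk hk sgnq_neg.
case=> [[hc hF] [_ hk]]; exists (flipp (row k.1 (A + 1%:M)) y); last by rewrite tauE // flippK.
split; split; try exact: flipp_cube.
  move: hF; rewrite /flipp /= rowE => ->.
  by case: ((A + 1%:M) k.1 F.1 != 0); rewrite ?sgnq_neg ?addbT ?addbF ?negbK.
by rewrite /flipp rowE hkk hk /= sgnq_neg negbK.
Qed.

Lemma meet_inj (R : realFieldType) n (G H K : sidx n) :
  (H = sneg K \/ H.1 != K.1) ->
  (forall y : point R n, in_facet G y /\ in_facet K y <-> in_facet H y /\ in_facet K y) -> G = H.
Proof.
move=> hH e.
case: hH => [eH | neHK].
  subst H.
  case: (eqVneq G.1 K.1) => [eGK|neGK].
    case: (boolP (G.2 == K.2)) => [/eqP e2|ne2].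
      have GK : G = K by apply: sidx_eq.
      have [h1 h2] := proj1 (e (pt2 R K K)) (conj (eq_ind_r (fun G => in_facet G _) (pt2_G R K K) GK) (pt2_G R K K)).
      by case: (facet_opp h2 h1).
    by apply: sidx_eq => //=; move: ne2; case: (G.2); case: (K.2).
  have [h1 h2] := proj1 (e (pt2 R G K)) (conj (pt2_G R G K) (pt2_K R neGK)).
  by case: (facet_opp h2 h1).
have [hG _] := proj2 (e (pt2 R H K)) (conj (pt2_G R H K) (pt2_K R neHK)).
case: hG => _; rewrite /pt2.
case: (eqVneq G.1 H.1) => [e1|ne1].
  by move=> /sgnq_inj e2; apply: sidx_eq.
case: (eqVneq G.1 K.1) => [e1|ne2]; last by move/eqP; rewrite eq_sym (negbTE (sgnq_neq0 _ _)).
move=> /sgnq_inj e2.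
have GK : G = K by apply: sidx_eq.
have [[_ hH] _] := proj1 (e (pt2 R K K)) (conj (eq_ind_r (fun G => in_facet G _) (pt2_G R K K) GK) (pt2_G R K K)).
move: hH; rewrite /pt2 (negbTE neHK) => /eqP; by rewrite eq_sym (negbTE (sgnq_neq0 _ _)).
Qed.

Lemma Psi_iff (R : realFieldType) n (A : 'M['F_2]_n) (k F G : sidx n) :
  (forall i, A i i = 0) -> Psi R A k F G <-> G = psi A k F.
Proof.
move=> hA.
have hkk : (A + 1%:M) k.1 k.1 != 0 by rewrite !mxE hA eqxx add0r mulr1n oner_neq0.
case: (eqVneq F k) => [->|neFk].
  have -> : psi A k k = sneg k by rewrite /psi hkk /sneg; case: (k.2).
  split; first by case=> [[_ ->] // | [] ].
  by move=> ->; left.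
have ne : F <> k by move=> e; move: neFk; rewrite e eqxx.
split.
  case=> [[e _] // | [_ h]].
  apply: (meet_inj (R := R) (K := sneg k)).
    case: (eqVneq F.1 k.1) => [e|ne1]; last by right.
    left; rewrite (same_idx ne e) /psi /sneg /= hkk; apply: sidx_eq => //=; by case: (k.2).
  move=> y; split.
    by move/h/(@rhs_char _ _ A k F y hA ne).
  by move/(@rhs_char _ _ A k F y hA ne)/h.
move=> ->; right; split => // y; split.
  by move/(@rhs_char _ _ A k F y hA ne).
by move/(@rhs_char _ _ A k F y hA ne).
Qed.

Lemma PsiComp_iff (R : realFieldType) n (A : 'M['F_2]_n) s (F G : sidx n) :
  (forall i, A i i = 0) ->
  PsiComp R A s F G <-> G = (F.1, F.2 (+) (vs A s 0 F.1 != 0)).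
Proof.
move=> hA; elim: s F => [|k s IH] F /=.
  rewrite /vs big_nil mxE eqxx addbF; case: F => ? ? /=; by split => ->.
have e : vs A (k :: s) 0 F.1 = (A + 1%:M) k.1 F.1 + vs A s 0 F.1.
  by rewrite /vs big_cons mxE rowE.
rewrite e nzD addbA.
split.
  case=> H /(Psi_iff _ _ _ _ hA) -> /(proj1 (IH _)) ->; by [].
move=> eG; exists (psi A k F); first exact/(Psi_iff _ _ _ _ hA).
by apply: (proj2 (IH _)); rewrite eG.
Qed.

Lemma nat_aux (m a b : nat) : (m - b <= m - a)%N -> (a <= m)%N -> (b <= m)%N -> (a <= b)%N.
Proof. move=> h1 h2 h3; rewrite -(subKn h2) -(subKn h3); exact: leq_sub2l. Qed.

Lemma mulP n (M : 'M['F_2]_n) (S : {set 'I_n}) m (W : 'M['F_2]_(m, #|S|)) :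
  W *m principal_sub M S = \matrix_(i, j) (W *m rows_sub M S) i (enum_val j).
Proof. apply/matrixP => i j; rewrite !mxE; apply: eq_bigr => l _; by rewrite !mxE. Qed.

Lemma kerRP n (M : 'M['F_2]_n) (S : {set 'I_n}) :
  (kermx (rows_sub M S) <= kermx (principal_sub M S))%MS.
Proof.
apply/sub_kermxP; rewrite mulP mulmx_ker; apply/matrixP => i j; by rewrite !mxE.
Qed.

Lemma rank_PR n (M : 'M['F_2]_n) (S : {set 'I_n}) :
  (\rank (principal_sub M S) <= \rank (rows_sub M S))%N.
Proof.
apply: nat_aux (rank_leq_row _) (rank_leq_row _).
by rewrite -!mxrank_ker; apply: mxrankS; exact: kerRP.
Qed.

Lemma rank_RP n (M : 'M['F_2]_n) (S : {set 'I_n}) :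
  (kermx (principal_sub M S) <= kermx (rows_sub M S))%MS ->
  (\rank (rows_sub M S) <= \rank (principal_sub M S))%N.
Proof.
move=> h; apply: nat_aux (rank_leq_row _) (rank_leq_row _).
by rewrite -!mxrank_ker; apply: mxrankS.
Qed.

Lemma key_back n (M : 'M['F_2]_n) (S : {set 'I_n}) (d : 'rV['F_2]_n) :
  \rank (principal_sub M S) = \rank (rows_sub M S) ->
  (d <= rows_sub M S)%MS -> (forall i, i \in S -> d 0 i = 0) -> d = 0.
Proof.
move=> hr /submxP [u ->] hd.
have hu : u *m principal_sub M S = 0.
  rewrite mulP; apply/matrixP => i j; rewrite !mxE ord1.
  have := hd _ (enum_valP j); by rewrite mxE.
have hk : (kermx (principal_sub M S) <= kermx (rows_sub M S))%MS.
  have := mxrank_leqif_eq (kerRP M S); rewrite !mxrank_ker hr.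
  by case=> _; rewrite eqxx => /esym/andP [_ ->].
apply/eqP; rewrite -sub_kermx; apply: submx_trans hk; exact/sub_kermxP.
Qed.

Lemma oppF2 n (v : 'rV['F_2]_n) : - v = v.
Proof. apply/rowP => i; rewrite mxE; case: (F2c (v 0 i)) => ->; by apply: val_inj. Qed.

Lemma vs_sub n (A : 'M['F_2]_n) (f : face n) s :
  all (fun k => f k.1 != None) s ->
  (vs A s <= rows_sub (A + 1%:M) [set i | f i != None])%MS.
Proof.
elim: s => [|k s IH] /=; first by rewrite /vs big_nil sub0mx.
case/andP => hk hs; rewrite /vs big_cons; apply: addmx_sub; last exact: IH.
have hk' : k.1 \in [set i | f i != None] by rewrite inE.
rewrite -(enum_rankK_in hk' hk') -row_rowsub; exact: row_sub.
Qed.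

Lemma addF2 (x : 'F_2) : x + x = 0.
Proof. case: (F2c x) => ->; by apply: val_inj. Qed.

Theorem mainTheorem13 (R : realFieldType) (n : nat) (A : 'M['F_2]_n) :
  (forall i, A i i = 0) ->
  (strong R A <->
   forall S : {set 'I_n},
     \rank (principal_sub (A + 1%:M) S) = \rank (rows_sub (A + 1%:M) S)).
Proof.
move=> hA; split.
- move=> hst S; apply/eqP; rewrite eqn_leq rank_PR /=; apply: rank_RP.
  have key : forall u : 'rV['F_2]_#|S|,
      u *m principal_sub (A + 1%:M) S = 0 -> u *m rows_sub (A + 1%:M) S = 0.
    move=> u hu.
    case: (set_0Vmem S) => [S0 | [i0 Hi0]].
      have -> : u = 0 by apply/rowP => j; have := ltn_ord j; rewrite {2}S0 cards0.
      by rewrite mul0mx.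
    pose f : face n := [ffun i => if i \in S then Some true else None].
    pose js := [seq enum_val j | j <- [seq j <- index_enum 'I_#|S| | u 0 j != 0]].
    have hall : all (fun j => f j != None) js.
      by apply/allP => i /mapP [j _ ->]; rewrite ffunE enum_valP.
    have [s [hs hv]] := @valid_exists R n A js f hA hall.
    have hvs : vs A s = u *m rows_sub (A + 1%:M) S.
      rewrite /vs -(big_map fst xpredT (fun i => row i (A + 1%:M))) hs big_map big_filter.
      rewrite mulmx_sum_row big_mkcond /=; apply: eq_bigr => j _; rewrite row_rowsub.
      by case: (F2c (u 0 j)) => ->; rewrite ?scale0r ?scale1r ?eqxx ?oner_neq0.
    have hff : flipf (vs A s) f = f.
      apply/ffunP => i; rewrite !ffunE; case: (boolP (i \in S)) => hi; last by case: (_ != 0).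
      have -> : vs A s 0 i = 0.
        rewrite hvs -(enum_rankK_in hi hi).
        have := congr1 (fun M : 'M['F_2]_(1, #|S|) => M 0 (enum_rank_in hi i : 'I_#|S|)) hu; rewrite mulP mxE [RHS]mxE => <- //.
      by rewrite eqxx.
    have m1 : maps_onto R A s f f by have := @maps_ontoI R n A s f hA; rewrite hff.
    have m0 : maps_onto R A [::] f f by have := @maps_ontoI R n A [::] f hA; rewrite /vs big_nil flipf0.
    have pf : proper_face f by exists i0; rewrite ffunE Hi0.
    have [hc _] := hst f f s [::] pf hv I m1 m0.
    pose x : point R n := fun _ => quarter R.
    have hx : in_face f x.
      split; first by move=> i; rewrite /x; have := sgnq_cube R true; rewrite /sgn mul1r.
      move=> i b; rewrite ffunE; case: (i \in S) => // - [<-]; by rewrite /x /sgn mul1r.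
    have := hc x hx; rewrite (@compE R n A s x hA) (@compE R n A [::] x hA) /vs big_nil flipp0 -/(vs A s).
    move=> hfx; rewrite -hvs; apply/rowP => i; rewrite [RHS]mxE.
    have := congr1 (fun p => p i) hfx; rewrite /flipp /x.
    case: (F2c (vs A s 0 i)) => -> //; rewrite oner_neq0 => e.
    have h := q_gt0 R; have : - quarter R < 0 by rewrite oppr_lt0.
    by rewrite e ltNge (ltW h).
  apply/sub_kermxP; apply/row_matrixP => i; rewrite row_mul row0.
  by apply: key; rewrite -row_mul mulmx_ker row0.
- move=> hr f g s1 s2 _ v1 v2 m1 m2.
  have e1 := @maps_ontoE R n A s1 f g hA m1.
  have e2 := @maps_ontoE R n A s2 f g hA m2.
  have a1 := @valid_inS R n A s1 f hA v1.
  have a2 := @valid_inS R n A s2 f hA v2.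
  have hv : vs A s1 = vs A s2.
    apply/eqP; rewrite -[vs A s2]oppF2 -addr_eq0; apply/eqP.
    apply: (key_back (hr [set i | f i != None])).
      by apply: addmx_sub; apply: vs_sub.
    move=> i; rewrite inE; case E: (f i) => [b|] // _.
    have := congr1 (fun h : face n => h i) (etrans (esym e1) e2); rewrite /= !ffunE E.
    move=> h.
    have hnz : (vs A s1 0 i != 0) = (vs A s2 0 i != 0).
      by move: h; case: (vs A s1 0 i != 0); case: (vs A s2 0 i != 0) => //= -[]; case: (b).
    by rewrite mxE (F2_eq hnz) addF2.
  split.
    by move=> x _; rewrite (@compE R n A s1 x hA) (@compE R n A s2 x hA) hv.
  move=> F G _; split.
    by move/(@PsiComp_iff R n A s1 F G hA) => ->; apply/(@PsiComp_iff R n A s2 F _ hA); rewrite hv.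
  by move/(@PsiComp_iff R n A s2 F G hA) => ->; apply/(@PsiComp_iff R n A s1 F _ hA); rewrite hv.
Qed.
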